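(* Let $\epsilon>0$. For all $\widehat\phi_1,\widehat\phi_2\in\mathcal{M}_\epsilon$ with $\widehat\phi_1\le\widehat\phi_2$ entrywise, one has $\widehat\Psi(\widehat\phi_1)\ge\widehat\Psi(\widehat\phi_2)$ entrywise.
   Context: Discrete setting: $\Omega=(0,1)$, $T>0$, $\sigma>0$; $m_0:[0,1]\to\mathbb{R}$ bounded with $m_0\ge0$. $f:[0,1]\times\mathbb{R}\to\mathbb{R}$ is continuous and nonincreasing in its second variable, bounded, and $f\le0$. For positive integers $I,J$: $\Delta t=T/I$, $\Delta x=1/J$, $x_j=j\Delta x$. $\mathcal{M}$ is the set of real matrices $(m_{i,j})_{0\le i\le I,0\le j\le J}$, $\mathcal{M}_\epsilon=\{m\in\mathcal{M}: m_{i,j}\ge\epsilon\ \forall i,j\}$. For $\widehat\phi\in\mathcal{M}_\epsilon$, $\widehat\Psi(\widehat\phi)$ is the unique $\widehat\psi\in\mathcal{M}$ with $\widehat\psi_{0,j}=m_0(x_j)/\widehat\phi_{0,j}$ and, for $0\le i\le I-1$, $0\le j\le J$, $\frac{\widehat\psi_{i+1,j}-\widehat\psi_{i,j}}{\Delta t}-\frac{\sigma^2}{2}\frac{\widehat\psi_{i+1,j+1}-2\widehat\psi_{i+1,j}+\widehat\psi_{i+1,j-1}}{(\Delta x)^2}=\frac{1}{\sigma^2}f(x_j,\widehat\phi_{i+1,j}\widehat\psi_{i+1,j})\widehat\psi_{i+1,j}$, with conventions $\widehat\psi_{i,-1}=\widehat\psi_{i,0}$, $\widehat\psi_{i,J+1}=\widehat\psi_{i,J}$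 (existence, uniqueness and $\widehat\psi\ge0$ being known). *)

(* Defs.v *)
From Stdlib Require Import Reals Lra Lia.
Open Scope R_scope.

(* Grid matrices (m_{i,j})_{0<=i<=I, 0<=j<=J} are represented as functions
   nat -> nat -> R; only entries with i <= I, j <= J are meaningful. *)

(* Neumann-type conventions: psi_{i,-1} = psi_{i,0}, psi_{i,J+1} = psi_{i,J}. *)
Definition nbL (j : nat) : nat := Nat.pred j.
Definition nbR (J j : nat) : nat := if Nat.ltb j J then S j else J.

Definition dt (T : R) (I : nat) : R := T / INR I.
Definition dx (J : nat) : R := 1 / INR J.
Definition xg (J j : nat) : R := INR j * dx J.

Definition in_Meps (eps : R) (I J : nat) (m : nat -> nat -> R) : Prop :=
  forall i j, (i <= I)%nat -> (j <= J)%nat -> eps <= m i j.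

(* psi satisfies the defining scheme of hat Psi(phi); by the (known)
   uniqueness, this means psi = hat Psi(phi). *)
Definition is_Psi (T sigma : R) (I J : nat) (m0 : R -> R) (f : R -> R -> R)
    (phi psi : nat -> nat -> R) : Prop :=
  (forall j, (j <= J)%nat -> psi O j = m0 (xg J j) / phi O j) /\
  (forall i j, (i < I)%nat -> (j <= J)%nat ->
     (psi (S i) j - psi i j) / dt T I
     - sigma ^ 2 / 2 *
       ((psi (S i) (nbR J j) - 2 * psi (S i) j + psi (S i) (nbL j)) / (dx J) ^ 2)
     = / sigma ^ 2 * f (xg J j) (phi (S i) j * psi (S i) j) * psi (S i) j).

(* Main.v *)
Require Import Defs.
From Stdlib Require Import Reals Lra Lia.
Open Scope R_scope.

Lemma Rdiv_le_0_compat a b : 0 <= a -> 0 < b -> 0 <= a / b.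
Proof. intros; unfold Rdiv; apply Rmult_le_pos; [lra|left; apply Rinv_0_lt_compat; lra]. Qed.

Lemma exists_max (g : nat -> R) (J : nat) :
  exists j, (j <= J)%nat /\ forall k, (k <= J)%nat -> g k <= g j.
Proof.
  induction J as [|J IH].
  - exists O; split; [lia|]. intros k Hk. replace k with O by lia. lra.
  - destruct IH as [j [Hj Hm]].
    destruct (Rle_dec (g (S J)) (g j)) as [H|H].
    + exists j; split; [lia|]. intros k Hk.
      destruct (Nat.eq_dec k (S J)) as [->|Hne]; [lra|]. apply Hm; lia.
    + exists (S J); split; [lia|]. intros k Hk.
      destruct (Nat.eq_dec k (S J)) as [->|Hne]; [lra|].
      specialize (Hm k ltac:(lia)). lra.
Qed.

Lemma nbR_le J j : (j <= J)%nat -> (nbR J j <= J)%nat.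
Proof. unfold nbR; intros; destruct (Nat.ltb_spec j J); lia. Qed.

Lemma nbL_le J j : (j <= J)%nat -> (nbL j <= J)%nat.
Proof. unfold nbL; intros; lia. Qed.

Lemma xg_in J j : (0 < J)%nat -> (j <= J)%nat -> 0 <= xg J j <= 1.
Proof.
  intros HJ Hj. unfold xg, dx.
  assert (0 < INR J) by (apply lt_0_INR; lia).
  assert (INR j <= INR J) by (apply le_INR; lia).
  assert (0 <= INR j) by apply pos_INR.
  split.
  - apply Rmult_le_pos; [lra|]. left; apply Rdiv_lt_0_compat; lra.
  - replace (INR j * (1 / INR J)) with (INR j / INR J) by (field; lra).
    apply Rmult_le_reg_r with (INR J); [lra|].
    replace (INR j / INR J * INR J) with (INR j) by (field; lra). lra.
Qed.

Lemma psi_nonneg T sigma m0 f I J eps phi psi :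
  0 < T -> 0 < sigma -> (0 < I)%nat -> (0 < J)%nat -> 0 < eps ->
  (forall x, 0 <= x <= 1 -> 0 <= m0 x) ->
  (forall x y, 0 <= x <= 1 -> f x y <= 0) ->
  in_Meps eps I J phi -> is_Psi T sigma I J m0 f phi psi ->
  forall i, (i <= I)%nat -> forall j, (j <= J)%nat -> 0 <= psi i j.
Proof.
  intros hT hs hI hJ he hm0 hfneg Hphi [H0 Hs].
  assert (HD : 0 < dt T I) by (unfold dt; apply Rdiv_lt_0_compat; [lra|apply lt_0_INR; lia]).
  assert (Hh : 0 < dx J ^ 2) by (unfold dx; apply pow_lt, Rdiv_lt_0_compat; [lra|apply lt_0_INR; lia]).
  assert (Hsg : 0 < sigma ^ 2) by (apply pow_lt; lra).
  induction i as [|i IH]; intros Hi j Hj.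
  - rewrite H0 by lia. apply Rdiv_le_0_compat.
    + apply hm0, xg_in; lia.
    + specialize (Hphi O j ltac:(lia) Hj). lra.
  - destruct (exists_max (fun k => - psi (S i) k) J) as [j0 [Hj0 Hm]].
    simpl in Hm.
    assert (0 <= psi (S i) j0); [|specialize (Hm j Hj); lra].
    apply Rnot_lt_le; intro Hneg.
    specialize (Hs i j0 ltac:(lia) Hj0).
    assert (Hq : 0 <= psi i j0) by (apply IH; lia).
    assert (HR := Hm _ (nbR_le J j0 Hj0)).
    assert (HL := Hm _ (nbL_le J j0 Hj0)).
    assert (HF := hfneg (xg J j0) (phi (S i) j0 * psi (S i) j0) (xg_in J j0 hJ Hj0)).
    set (F := f (xg J j0) (phi (S i) j0 * psi (S i) j0)) in *.
    set (p := psi (S i) j0) in *.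
    set (q := psi i j0) in *.
    set (pR := psi (S i) (nbR J j0)) in *.
    set (pL := psi (S i) (nbL j0)) in *.
    assert (E1 : (p - q) / dt T I < 0).
    { apply Ropp_lt_cancel. rewrite Ropp_0.
      replace (- ((p - q) / dt T I)) with ((q - p) / dt T I) by (field; lra).
      apply Rdiv_lt_0_compat; lra. }
    assert (E2 : 0 <= sigma ^ 2 / 2 * ((pR - 2 * p + pL) / dx J ^ 2)).
    { apply Rmult_le_pos; [lra|]. apply Rdiv_le_0_compat; lra. }
    assert (E3 : 0 <= / sigma ^ 2 * (F * p)).
    { apply Rmult_le_pos; [left; apply Rinv_0_lt_compat; lra|]. nra. }
    rewrite Rmult_assoc in Hs. lra.
Qed.

Theorem proposition10
  (T sigma : R) (m0 : R -> R) (f : R -> R -> R) (I J : nat) (eps : R)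
  (hT : 0 < T) (hsigma : 0 < sigma)
  (hm0b : exists M, forall x, 0 <= x <= 1 -> Rabs (m0 x) <= M)
  (hm0 : forall x, 0 <= x <= 1 -> 0 <= m0 x)
  (hfcont : forall x y, 0 <= x <= 1 -> forall e, 0 < e -> exists d, 0 < d /\
      forall x' y', 0 <= x' <= 1 -> Rabs (x' - x) < d -> Rabs (y' - y) < d ->
        Rabs (f x' y' - f x y) < e)
  (hfmono : forall x y1 y2, 0 <= x <= 1 -> y1 <= y2 -> f x y2 <= f x y1)
  (hfb : exists M, forall x y, 0 <= x <= 1 -> Rabs (f x y) <= M)
  (hfneg : forall x y, 0 <= x <= 1 -> f x y <= 0)
  (hI : (0 < I)%nat) (hJ : (0 < J)%nat) (heps : 0 < eps) :
  forall phi1 phi2 psi1 psi2 : nat -> nat -> R,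
    in_Meps eps I J phi1 -> in_Meps eps I J phi2 ->
    (forall i j, (i <= I)%nat -> (j <= J)%nat -> phi1 i j <= phi2 i j) ->
    is_Psi T sigma I J m0 f phi1 psi1 ->
    is_Psi T sigma I J m0 f phi2 psi2 ->
    forall i j, (i <= I)%nat -> (j <= J)%nat -> psi2 i j <= psi1 i j.
Proof.
  intros phi1 phi2 psi1 psi2 Hp1 Hp2 Hle HP1 HP2.
  assert (N1 := psi_nonneg _ _ _ _ _ _ _ _ _ hT hsigma hI hJ heps hm0 hfneg Hp1 HP1).
  assert (N2 := psi_nonneg _ _ _ _ _ _ _ _ _ hT hsigma hI hJ heps hm0 hfneg Hp2 HP2).
  destruct HP1 as [A0 As]. destruct HP2 as [B0 Bs].
  assert (HD : 0 < dt T I) by (unfold dt; apply Rdiv_lt_0_compat; [lra|apply lt_0_INR; lia]).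
  assert (Hh : 0 < dx J ^ 2) by (unfold dx; apply pow_lt, Rdiv_lt_0_compat; [lra|apply lt_0_INR; lia]).
  assert (Hsg : 0 < sigma ^ 2) by (apply pow_lt; lra).
  induction i as [|i IH]; intros j Hi Hj.
  - rewrite A0, B0 by lia.
    assert (e1 := Hp1 O j ltac:(lia) Hj). assert (e2 := Hp2 O j ltac:(lia) Hj).
    assert (l := Hle O j ltac:(lia) Hj).
    assert (m := hm0 (xg J j) (xg_in J j hJ Hj)).
    unfold Rdiv. apply Rmult_le_compat_l; [lra|].
    apply Rinv_le_contravar; lra.
  - destruct (exists_max (fun k => psi2 (S i) k - psi1 (S i) k) J) as [j0 [Hj0 Hm]].
    simpl in Hm.
    assert (psi2 (S i) j0 - psi1 (S i) j0 <= 0); [|specialize (Hm j Hj); lra].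
    apply Rnot_lt_le; intro Hpos.
    specialize (As i j0 ltac:(lia) Hj0). specialize (Bs i j0 ltac:(lia) Hj0).
    assert (Hq := IH j0 ltac:(lia) Hj0).
    assert (HR := Hm _ (nbR_le J j0 Hj0)).
    assert (HL := Hm _ (nbL_le J j0 Hj0)).
    assert (Hx := xg_in J j0 hJ Hj0).
    assert (n1 := N1 (S i) Hi j0 Hj0).
    assert (ph1 := Hp1 (S i) j0 Hi Hj0).
    assert (ph12 := Hle (S i) j0 Hi Hj0).
    assert (Hprod : phi1 (S i) j0 * psi1 (S i) j0 <= phi2 (S i) j0 * psi2 (S i) j0) by nra.
    assert (HFm := hfmono _ _ _ Hx Hprod).
    assert (HF1 := hfneg (xg J j0) (phi1 (S i) j0 * psi1 (S i) j0) Hx).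
    set (F1 := f (xg J j0) (phi1 (S i) j0 * psi1 (S i) j0)) in *.
    set (F2 := f (xg J j0) (phi2 (S i) j0 * psi2 (S i) j0)) in *.
    set (p1 := psi1 (S i) j0) in *. set (p2 := psi2 (S i) j0) in *.
    set (q1 := psi1 i j0) in *. set (q2 := psi2 i j0) in *.
    set (R1 := psi1 (S i) (nbR J j0)) in *. set (R2 := psi2 (S i) (nbR J j0)) in *.
    set (L1 := psi1 (S i) (nbL j0)) in *. set (L2 := psi2 (S i) (nbL j0)) in *.
    set (D := dt T I) in *. set (h := dx J ^ 2) in *. set (s := sigma ^ 2) in *.
    assert (E1 : 0 < (p2 - q2) / D - (p1 - q1) / D).
    { replace ((p2 - q2) / D - (p1 - q1) / D) with (((p2 - p1) - (q2 - q1)) / D) by (field; lra).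
      apply Rdiv_lt_0_compat; lra. }
    assert (E2 : s / 2 * ((R2 - 2 * p2 + L2) / h) - s / 2 * ((R1 - 2 * p1 + L1) / h) <= 0).
    { replace (s / 2 * ((R2 - 2 * p2 + L2) / h) - s / 2 * ((R1 - 2 * p1 + L1) / h))
        with (- (s / 2 * ((2 * (p2 - p1) - (R2 - R1) - (L2 - L1)) / h))) by (field; lra).
      apply Ropp_le_cancel. rewrite Ropp_involutive, Ropp_0.
      apply Rmult_le_pos; [lra|]. apply Rdiv_le_0_compat; lra. }
    assert (E3 : / s * F2 * p2 - / s * F1 * p1 <= 0).
    { replace (/ s * F2 * p2 - / s * F1 * p1) with (- (/ s * (F1 * p1 - F2 * p2))) by ring.
      apply Ropp_le_cancel. rewrite Ropp_involutive, Ropp_0.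
      apply Rmult_le_pos; [left; apply Rinv_0_lt_compat; lra|]. nra. }
    lra.
Qed.
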